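(* Let $B$ be a blueprint and let $I\subseteq B$ be an ideal of $B$ that contains all absorbing elements of $B$. Then $\sim_I$ is a congruence on $B$, its absorbing ideal $I_{\sim_I}$ equals $I$, and $\sim_I$ is the smallest congruence on $B$ whose absorbing ideal is $I$.
   Context: A monoid is a commutative semigroup $A$, written multiplicatively, with neutral element $1$. For a monoid $A$, $\mathbb N[A]$ denotes the semiring of finite formal sums $\sum a_i$ of elements $a_i\in A$ (repetitions allowed), with empty sum $\underline0$ and multiplication extended bilinearly from $A$. A pre-addition on $A$ is a relation $\mathcal R\subseteq\mathbb N[A]\times\mathbb N[A]$, written $\sum a_i\equiv\sum b_j$, which is an equivalence relation and satisfies: if $\sum a_i\equiv\sum b_j$ and $\sum c_k\equiv\sum d_l$, then $\sum a_i+\sum c_k\equiv\sum b_j+\sum d_l$ and $\sum_{i,k}a_ic_k\equiv\sum_{j,l}b_jd_l$. A blueprint $B=(A,\mathcal R)$ is a monoid $A$ with a pre-addition $\mathcal R$; we write $a\in B$ for $a\in A$. An element $e$ with $e\equiv\underline0$ is a zero of $B$; an element $e$ with $eb\equiv e$ for all $b\in B$ is an absorbing element. For an equivalence relation $\sim$ on $A$, its linear extension $\sim_{\mathbb N}$ is the equivalence relation on $\mathbb N[A]$ generated by $\sum_{i=1}^n a_i\sim_{\mathbb N}\sum_{i=1}^n b_i$ whenever $a_i\sim b_i$ for all $i$; and $\sim_{\mathcal R}$ is the smallest equivalence relation on $\mathbb N[A]$ containing both $\mathcal R$ and $\sim_{\mathbb N}$. A congruence on $B$ is an equivalence relation $\sim$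 on $A$ such that (C1) $\sim_{\mathbb N}$ is a pre-addition on $A$, and (C2) the restriction of $\sim_{\mathcal R}$ to $A$ equals $\sim$. The absorbing ideal of a congruence $\sim$ is $I_\sim=\{e\in B: eb\sim e\text{ for all }b\in B\}$. For a subset $I\subseteq B$, let $\sim^I$ be the equivalence relation on $A$ with $a\sim^I b$ iff $a=b$ or $a,b\in I$, and let $\sim_I$ be the relation on $A$ with $a\sim_I b$ iff there is a finite sequence $a\equiv\sum_k c_{1,k}\sim^I_{\mathbb N}\sum_k d_{1,k}\equiv\sum_k c_{2,k}\sim^I_{\mathbb N}\cdots\sim^I_{\mathbb N}\sum_k d_{n,k}\equiv b$ with $c_{i,k},d_{i,k}\in A$ (equivalently, $\sim_I$ is the restriction of $(\sim^I)_{\mathcal R}$ to $A$). An ideal of $B$ is a subset $I\subseteq B$ such that (I1) $ab\in I$ for all $a\in I$, $b\in B$; (I2) every zero of $B$ lies in $I$; (I3) if $a\sim_I b$ and $b\in I$, then $a\in I$. *)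

(* Defs.v *)
From Stdlib Require Import List Permutation Relations.
Import ListNotations.
Set Implicit Arguments.

(* Formal sums in N[A] are represented by lists; two lists denote the same
   element of N[A] iff they are permutations of each other.  Relations on
   N[A] correspond exactly to relations on lists that are saturated under
   Permutation (for equivalence relations: that contain Permutation). *)

Section Blueprints.
Variable A : Type.
Variable mul : A -> A -> A.

Definition lmul (l1 l2 : list A) : list A :=
  flat_map (fun a => map (fun c => mul a c) l2) l1.

Definition is_equiv {T : Type} (R : T -> T -> Prop) : Prop :=
  (forall x, R x x) /\ (forall x y, R x y -> R y x) /\
  (forall x y z, R x y -> R y z -> R x z).

(* pre-addition: an equivalence relation on N[A] (i.e. on lists, compatible
   with reordering) closed under sums and products *)
Definition is_preaddition (R : list A -> list A -> Prop) : Prop :=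
  is_equiv R /\
  (forall l1 l2, Permutation l1 l2 -> R l1 l2) /\
  (forall a b c d, R a b -> R c d -> R (a ++ c) (b ++ d)) /\
  (forall a b c d, R a b -> R c d -> R (lmul a c) (lmul b d)).

(* linear extension sim_N of an equivalence relation sim on A:
   equivalence on N[A] generated by sum a_i ~ sum b_i with a_i ~ b_i *)
Definition linext (sim : A -> A -> Prop) : list A -> list A -> Prop :=
  clos_refl_sym_trans (list A)
    (fun l1 l2 => Permutation l1 l2 \/ Forall2 sim l1 l2).

Definition linextR (R : list A -> list A -> Prop) (sim : A -> A -> Prop)
  : list A -> list A -> Prop :=
  clos_refl_sym_trans (list A) (fun l1 l2 => R l1 l2 \/ linext sim l1 l2).
End Blueprints.

Record Blueprint := {
  bp_car :> Type;
  bp_mul : bp_car -> bp_car -> bp_car;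
  bp_one : bp_car;
  bp_mulA : forall a b c, bp_mul a (bp_mul b c) = bp_mul (bp_mul a b) c;
  bp_mulC : forall a b, bp_mul a b = bp_mul b a;
  bp_mul1 : forall a, bp_mul bp_one a = a;
  bp_R : list bp_car -> list bp_car -> Prop;
  bp_R_pre : is_preaddition bp_mul bp_R
}.

Section BlueprintDefs.
Variable B : Blueprint.
Local Notation mul := (bp_mul B).
Local Notation R := (bp_R B).

(* e is a zero: e == 0 (empty sum) *)
Definition is_zero (e : B) : Prop := R [e] [].

Definition is_absorbing (e : B) : Prop := forall b : B, R [mul e b] [e].

Definition congruence (sim : B -> B -> Prop) : Prop :=
  is_equiv sim /\
  is_preaddition mul (linext sim) /\
  (forall a b : B, linextR R sim [a] [b] <-> sim a b).

Definition absorbing_ideal (sim : B -> B -> Prop) (e : B) : Prop :=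
  forall b : B, sim (mul e b) e.

Definition simsup (I : B -> Prop) (a b : B) : Prop :=
  a = b \/ (I a /\ I b).

(* ~_I : restriction of (~^I)_R to A *)
Definition simI (I : B -> Prop) (a b : B) : Prop :=
  linextR R (simsup I) [a] [b].

Definition is_ideal (I : B -> Prop) : Prop :=
  (forall a b : B, I a -> I (mul a b)) /\
  (forall e : B, is_zero e -> I e) /\
  (forall a b : B, simI I a b -> I b -> I a).
End BlueprintDefs.
Arguments is_zero {B}.
Arguments is_absorbing {B}.
Arguments congruence {B}.
Arguments absorbing_ideal {B}.
Arguments simsup {B}.
Arguments simI {B}.
Arguments is_ideal {B}.

(* Main.v *)
Require Import Defs.
From Stdlib Require Import List Permutation Relations Classical.
Import ListNotations.

Section G.
Variable A : Type.
Variable mul : A -> A -> A.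
Hypothesis mulC : forall a b, mul a b = mul b a.
Variable R : list A -> list A -> Prop.
Hypothesis HR : is_preaddition mul R.

Definition mulclosed (s : A -> A -> Prop) := forall x y z, s x y -> s (mul x z) (mul y z).

Lemma rst_equiv T (r : T -> T -> Prop) : is_equiv (clos_refl_sym_trans T r).
Proof.
  split; [intro; apply rst_refl | split; [intros; now apply rst_sym | intros; eapply rst_trans; eauto]].
Qed.

Lemma Forall2_refl (s : A -> A -> Prop) (Hs : forall x, s x x) l : Forall2 s l l.
Proof. induction l; constructor; auto. Qed.

Lemma linext_app_r (s : A -> A -> Prop) (Hs : forall x, s x x) (a b c : list A) :
  linext s a b -> linext s (a ++ c) (b ++ c).
Proof.
  unfold linext; intro H; induction H.
  - apply rst_step. destruct H as [H|H];
      [left; now apply Permutation_app_tail | right; apply Forall2_app; auto; apply Forall2_refl; auto].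
  - apply rst_refl.
  - now apply rst_sym.
  - eapply rst_trans; eauto.
Qed.

Lemma linext_app_l (s : A -> A -> Prop) (Hs : forall x, s x x) (a b c : list A) :
  linext s a b -> linext s (c ++ a) (c ++ b).
Proof.
  unfold linext; intro H; induction H.
  - apply rst_step. destruct H as [H|H];
      [left; now apply Permutation_app_head | right; apply Forall2_app; auto; apply Forall2_refl; auto].
  - apply rst_refl.
  - now apply rst_sym.
  - eapply rst_trans; eauto.
Qed.

Lemma linext_app (s : A -> A -> Prop) (Hs : forall x, s x x) (a b c d : list A) :
  linext s a b -> linext s c d -> linext s (a ++ c) (b ++ d).
Proof.
  intros; eapply rst_trans; [apply linext_app_r; eauto | apply linext_app_l; eauto].
Qed.

Lemma lmul_cons (x : A) (a c : list A) : lmul mul (x :: a) c = map (mul x) c ++ lmul mul a c.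
Proof. reflexivity. Qed.

Lemma perm_lmul_l (a b c : list A) : Permutation a b -> Permutation (lmul mul a c) (lmul mul b c).
Proof.
  induction 1.
  - constructor.
  - rewrite !lmul_cons; now apply Permutation_app_head.
  - rewrite !lmul_cons, !app_assoc; apply Permutation_app_tail, Permutation_app_comm.
  - eapply Permutation_trans; eauto.
Qed.

Lemma perm_lmul_r (a b c : list A) : Permutation a b -> Permutation (lmul mul c a) (lmul mul c b).
Proof.
  intro H; induction c; [constructor | rewrite !lmul_cons; apply Permutation_app; auto; now apply Permutation_map].
Qed.

Lemma F2_map (s : A -> A -> Prop) (Hm : mulclosed s) (x : A) (a b : list A) :
  Forall2 s a b -> Forall2 s (map (mul x) a) (map (mul x) b).
Proof.
  induction 1; simpl; constructor; auto. rewrite (mulC x x0), (mulC x y); auto.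
Qed.

Lemma F2_map2 (s : A -> A -> Prop) (Hm : mulclosed s) (x y : A) (c : list A) :
  s x y -> Forall2 s (map (mul x) c) (map (mul y) c).
Proof. intro; induction c; simpl; constructor; auto. Qed.

Lemma F2_lmul_l (s : A -> A -> Prop) (Hm : mulclosed s) (a b c : list A) :
  Forall2 s a b -> Forall2 s (lmul mul a c) (lmul mul b c).
Proof.
  induction 1; [constructor | rewrite !lmul_cons; apply Forall2_app; auto using F2_map2].
Qed.

Lemma F2_lmul_r (s : A -> A -> Prop) (Hm : mulclosed s) (a b c : list A) :
  Forall2 s a b -> Forall2 s (lmul mul c a) (lmul mul c b).
Proof.
  intro H; induction c; [constructor | rewrite !lmul_cons; apply Forall2_app; auto using F2_map].
Qed.

Lemma linext_lmul_r (s : A -> A -> Prop) (Hm : mulclosed s) (a b c : list A) :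
  linext s a b -> linext s (lmul mul a c) (lmul mul b c).
Proof.
  unfold linext; intro H; induction H.
  - apply rst_step. destruct H as [H|H];
      [left; now apply perm_lmul_l | right; now apply F2_lmul_l].
  - apply rst_refl.
  - now apply rst_sym.
  - eapply rst_trans; eauto.
Qed.

Lemma linext_lmul_l (s : A -> A -> Prop) (Hm : mulclosed s) (a b c : list A) :
  linext s a b -> linext s (lmul mul c a) (lmul mul c b).
Proof.
  unfold linext; intro H; induction H.
  - apply rst_step. destruct H as [H|H];
      [left; now apply perm_lmul_r | right; now apply F2_lmul_r].
  - apply rst_refl.
  - now apply rst_sym.
  - eapply rst_trans; eauto.
Qed.

Lemma linext_pre (s : A -> A -> Prop) (Hs : forall x, s x x) (Hm : mulclosed s) :
  is_preaddition mul (linext s).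
Proof.
  split; [apply rst_equiv|split;[intros; apply rst_step; now left| split;
    [apply linext_app; auto | intros; eapply rst_trans; [apply linext_lmul_r | apply linext_lmul_l]; eauto]]].
Qed.

Lemma linextR_app_r (s : A -> A -> Prop) (Hs : forall x, s x x) (a b c : list A) :
  linextR R s a b -> linextR R s (a ++ c) (b ++ c).
Proof.
  destruct HR as [[Rr [Rs Rt]] [Rp [Ra Rm]]].
  unfold linextR; intro H; induction H.
  - apply rst_step. destruct H as [H|H];
      [left; apply Ra; auto | right; now apply linext_app_r].
  - apply rst_refl.
  - now apply rst_sym.
  - eapply rst_trans; eauto.
Qed.

Lemma linextR_app_l (s : A -> A -> Prop) (Hs : forall x, s x x) (a b c : list A) :
  linextR R s a b -> linextR R s (c ++ a) (c ++ b).
Proof.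
  destruct HR as [[Rr [Rs Rt]] [Rp [Ra Rm]]].
  unfold linextR; intro H; induction H.
  - apply rst_step. destruct H as [H|H];
      [left; apply Ra; auto | right; now apply linext_app_l].
  - apply rst_refl.
  - now apply rst_sym.
  - eapply rst_trans; eauto.
Qed.

Lemma linextR_lmul_r (s : A -> A -> Prop) (Hm : mulclosed s) (a b c : list A) :
  linextR R s a b -> linextR R s (lmul mul a c) (lmul mul b c).
Proof.
  destruct HR as [[Rr [Rs Rt]] [Rp [Ra Rm]]].
  unfold linextR; intro H; induction H.
  - apply rst_step. destruct H as [H|H];
      [left; apply Rm; auto | right; now apply linext_lmul_r].
  - apply rst_refl.
  - now apply rst_sym.
  - eapply rst_trans; eauto.
Qed.

Lemma linextR_lmul_l (s : A -> A -> Prop) (Hm : mulclosed s) (a b c : list A) :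
  linextR R s a b -> linextR R s (lmul mul c a) (lmul mul c b).
Proof.
  destruct HR as [[Rr [Rs Rt]] [Rp [Ra Rm]]].
  unfold linextR; intro H; induction H.
  - apply rst_step. destruct H as [H|H];
      [left; apply Rm; auto | right; now apply linext_lmul_l].
  - apply rst_refl.
  - now apply rst_sym.
  - eapply rst_trans; eauto.
Qed.

Lemma linextR_pre (s : A -> A -> Prop) (Hs : forall x, s x x) (Hm : mulclosed s) :
  is_preaddition mul (linextR R s).
Proof.
  destruct HR as [[Rr [Rs Rt]] [Rp [Ra Rm]]].
  split; [apply rst_equiv|split;[intros; apply rst_step; left; now apply Rp| split]].
  - intros; eapply rst_trans; [apply linextR_app_r; eauto | apply linextR_app_l; eauto].
  - intros; eapply rst_trans; [apply linextR_lmul_r | apply linextR_lmul_l]; eauto.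
Qed.

Lemma linextR_mono (s1 s2 : A -> A -> Prop) (Hi : forall x y, s1 x y -> s2 x y) l1 l2 :
  linextR R s1 l1 l2 -> linextR R s2 l1 l2.
Proof.
  unfold linextR; intro H; induction H.
  - apply rst_step. destruct H as [H|H]; [now left | right].
    unfold linext in *; induction H.
    + apply rst_step. destruct H as [H|H]; [now left | right; eapply Forall2_impl; eauto].
    + apply rst_refl.
    + now apply rst_sym.
    + eapply rst_trans; eauto.
  - apply rst_refl.
  - now apply rst_sym.
  - eapply rst_trans; eauto.
Qed.

End G.

Theorem mainTheorem9 (B : Blueprint) (I : B -> Prop)
  (HI : is_ideal I)
  (Habs : forall e : B, is_absorbing e -> I e) :
  congruence (simI I) /\
  (forall e : B, absorbing_ideal (simI I) e <-> I e) /\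
  (forall sim : B -> B -> Prop, congruence sim ->
     (forall e : B, absorbing_ideal sim e <-> I e) ->
     forall a b : B, simI I a b -> sim a b).
Proof.
  destruct HI as [I1 [I2 I3]].
  pose proof (bp_mulC B) as mulC.
  pose proof (bp_R_pre B) as HR.
  assert (Ss_refl : forall x, simsup I x x) by (intro; now left).
  assert (Ss_mul : @mulclosed B (bp_mul B) (simsup I)).
  { intros x y z [->|[Hx Hy]]; [now left | right; split; auto]. }
  pose proof (@linextR_pre B (bp_mul B) mulC (bp_R B) HR (simsup I) Ss_refl Ss_mul) as LP.
  destruct LP as [_ [_ [La Lm]]].
  assert (Si_refl : forall x, simI I x x) by (intro; apply rst_refl).
  assert (Si_mul : @mulclosed B (bp_mul B) (simI I)).
  { intros x y z H. exact (Lm [x] [y] [z] [z] H (rst_refl _ _ _)). }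
  assert (KF : forall l1 l2, Forall2 (simI I) l1 l2 -> linextR (bp_R B) (simsup I) l1 l2).
  { induction 1; [apply rst_refl|].
    change (x :: l) with ([x] ++ l); change (y :: l') with ([y] ++ l'). now apply La. }
  assert (KL : forall l1 l2, linext (simI I) l1 l2 -> linextR (bp_R B) (simsup I) l1 l2).
  { destruct HR as [_ [Rp _]].
    intros l1 l2 H; induction H.
    - destruct H as [H|H]; [apply rst_step; left; now apply Rp | now apply KF].
    - apply rst_refl.
    - now apply rst_sym.
    - eapply rst_trans; eauto. }
  assert (KR : forall l1 l2, linextR (bp_R B) (simI I) l1 l2 -> linextR (bp_R B) (simsup I) l1 l2).
  { intros l1 l2 H; induction H.
    - destruct H as [H|H]; [apply rst_step; now left | now apply KL].
    - apply rst_refl.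
    - now apply rst_sym.
    - eapply rst_trans; eauto. }
  split; [|split].
  - split; [split; [exact Si_refl | split; [intros; now apply rst_sym | intros; eapply rst_trans; eauto]]|split; [apply (@linext_pre B (bp_mul B) mulC); auto|]].
    intros a b; split; intro H; [now apply KR|].
    apply rst_step; right; apply rst_step; right; constructor; auto.
  - intro e; split.
    + intro H. destruct (classic (exists z, I z)) as [[z Hz]|Hn].
      * apply (I3 e (bp_mul B e z)); [apply rst_sym, H|]. rewrite mulC; now apply I1.
      * apply Habs. intro b.
        destruct HR as [[Rr [Rs Rt]] [Rp _]].
        assert (Hgen : forall l1 l2, linextR (bp_R B) (simsup I) l1 l2 -> bp_R B l1 l2).
        { intros l1 l2 H1; induction H1.
          - destruct H0 as [H0|H0]; auto.
            induction H0.
            + destruct H0 as [H0|H0]; [now apply Rp|].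
              assert (x = y) as ->; [|apply Rr].
              induction H0; auto. f_equal; auto.
              destruct H0 as [->|[Hx _]]; auto. exfalso; eauto.
            + apply Rr.
            + now apply Rs.
            + eapply Rt; eauto.
          - apply Rr.
          - now apply Rs.
          - eapply Rt; eauto. }
        apply Hgen, H.
    + intros He b. apply rst_step; right; apply rst_step; right; constructor; [|constructor].
      right; split; auto.
  - intros sim Hc Hab a b H.
    destruct Hc as [[sr [ss st]] [_ Hiff]].
    apply Hiff. revert H; apply (@linextR_mono B (bp_R B)).
    intros x y [->|[Hx Hy]]; [apply sr|].
    apply Hab in Hx; apply Hab in Hy.
    apply (st x (bp_mul B x y) y); [apply ss, Hx|]. rewrite mulC; apply Hy.
Qed.
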